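(* Let $H$ be a digraph (possibly with loops) and let $D$ be an $H$-colored semicomplete digraph. If $k \geq 3$, then $D$ has a $(k,H)$-kernel.
   Context: All digraphs are finite. A digraph is semicomplete if every two distinct vertices are joined by at least one arc. $D$ has no loops and comes with a map $\rho: A(D)\to V(H)$. For a walk $W=(x_0,\ldots,x_n)$ in $D$, there is an obstruction on $x_i$ if $(\rho(x_{i-1},x_i),\rho(x_i,x_{i+1})) \notin A(H)$; for an open walk this is considered at internal vertices $x_i$, $1\le i\le n-1$, for a closed walk at all $i\in\{0,\ldots,n-1\}$ with indices modulo $n$. $O_H(W)$ is the set of indices with an obstruction; the $H$-length is $l_H(W)=|O_H(W)|+1$ for open $W$ and $|O_H(W)|$ for closed $W$. A $(k,H)$-kernel ($k\ge2$) is a set $S\subseteq V(D)$ such that for every two distinct $u,v\in S$ every directed $uv$-path in $D$ has $H$-length at least $k$, and for every $x\in V(D)\setminus S$ there is a directed path from $x$ to a vertex of $S$ of $H$-length at most $k-1$. *)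

(* Defs.v *)
From mathcomp Require Import all_boot.
Set Implicit Arguments. Unset Strict Implicit. Unset Printing Implicit Defensive.

Section HColored.
Variables (VH : finType) (h : rel VH).
(* D : digraph on the finite vertex type T with arc relation a;
   rho assigns to each arc (x,y) of D (a x y) a vertex of H; its values on
   non-arcs are irrelevant. *)
Variables (T : finType) (a : rel T) (rho : T -> T -> VH).

Definition no_loops : Prop := irreflexive a.

Definition semicomplete : Prop := forall u v : T, u != v -> a u v || a v u.

(* Number of obstructions at the internal vertices of the walk x, y, s... ,
   i.e. obstructions at y, and then at the following internal vertices. *)
Fixpoint obs (x y : T) (s : seq T) : nat :=
  match s with
  | [::] => 0
  | z :: s' => (~~ h (rho x y) (rho y z)) + obs y z s'
  end.

(* H-length of the open walk x :: p : |O_H| + 1. *)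
Definition hlen (x : T) (p : seq T) : nat :=
  match p with
  | [::] => 1
  | y :: p' => (obs x y p').+1
  end.

Definition dpath (x v : T) (p : seq T) : bool :=
  [&& path a x p, uniq (x :: p) & last x p == v].

Definition kH_kernel (k : nat) (S : {set T}) : Prop :=
  (forall u v, u \in S -> v \in S -> u != v ->
     forall p, dpath u v p -> k <= hlen u p) /\
  (forall x, x \notin S ->
     exists v p, [/\ v \in S, dpath x v p & hlen x p <= k - 1]).

End HColored.

(* Main.v *)
Require Import Defs.
From mathcomp Require Import all_boot.

Theorem theorem6 (VH : finType) (h : rel VH) (T : finType) (a : rel T)
  (rho : T -> T -> VH) (k : nat) :
  no_loops a -> semicomplete a -> 3 <= k ->
  exists S : {set T}, kH_kernel h a rho k S.
Proof.
move=> nl sc k3.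
case: (pickP (fun _ : T => true)) => [v0 _|T0]; last first.
  exists set0; split; first by move=> u v; rewrite in_set0.
  by move=> x; have := T0 x.
pose indeg (w : T) := #|[set y | a y w]|.
have [v _ vmax] := @arg_maxnP T v0 xpredT indeg isT.
exists [set v]; split.
  by move=> u w; rewrite !in_set1 => /eqP -> /eqP ->; rewrite eqxx.
move=> x; rewrite in_set1 => xv.
have xv' : v != x by rewrite eq_sym.
case axv: (a x v).
  exists v, [:: v]; split; rewrite ?in_set1 //.
    by rewrite /dpath /= axv !inE xv eqxx.
  by rewrite /hlen /=; case: k k3 => [|[|]].
have avx : a v x by move: (sc _ _ xv'); rewrite axv orbF.
case: (pickP (fun w => a x w && a w v)) => [w /andP [axw awv]|none].
  have wx : w != x by apply: contraTneq axw => ->; rewrite nl.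
  have wv : w != v by apply: contraTneq awv => ->; rewrite nl.
  exists v, [:: w; v]; split; rewrite ?in_set1 //.
    rewrite /dpath /= axw awv !inE eqxx /= !andbT.
    by rewrite eq_sym (negbTE wx) (negbTE xv) wv.
  rewrite /hlen /= addn0; case: k k3 => [|[|[|k']]] //= _.
  by case: (h _ _).
exfalso.
have sub : [set y | a y v] \proper [set y | a y x].
  apply/properP; split.
    apply/subsetP => y; rewrite !inE => ayv.
    have yx : y != x by apply: contraTneq ayv => ->; rewrite axv.
    have := none y; rewrite ayv andbT => /negbT axy.
    by move: (sc _ _ yx); rewrite (negbTE axy) orbF.
  by exists v; rewrite !inE ?avx ?nl.
have := proper_card sub.
by move: (vmax x isT); rewrite /indeg => le lt; move: (leq_trans lt le); rewrite ltnn.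
Qed.
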